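(* Let $(K,W)$ be either $(K^+_{m,n},W^+_{m,n})$ or $(K_{m,n},W_{m,n})$, let $P$ be a simple $K$-module and $\lambda\in\mathbb{C}^n$. Then: (1) $\sigma_\lambda^2=0$ on $F(P,M(\lambda))$; (2) for $r\in\{0,\dots,m\}$ (with $\lambda=\mathbf{0}$ if $r\neq m$), $\sigma_\lambda(F(P,L(V(r)\otimes N(\lambda))))=0$ if and only if $(r;\lambda)=(m;(-1,\dots,-1))$.
   Context: All vector spaces are over $\mathbb{C}$; modules are $\mathbb{Z}_2$-graded, simple means no graded submodules other than $0$ and itself. Fix $m,n\in\mathbb{Z}_{\ge0}$, not both zero. $A^+_{m,n}=\mathbb{C}[t_1,\dots,t_m]\otimes\Lambda(\xi_1,\dots,\xi_n)$, $A_{m,n}=\mathbb{C}[t_1^{\pm1},\dots,t_m^{\pm1}]\otimes\Lambda(\xi_1,\dots,\xi_n)$ ($t_i$ even, $\xi_j$ odd). $W^+_{m,n}$ (resp. $W_{m,n}$) is the Lie superalgebra of super-derivations of $A^+_{m,n}$ (resp. $A_{m,n}$); $K^+_{m,n}$ (resp. $K_{m,n}$) is the super Weyl algebra of operators on $A^+_{m,n}$ (resp. $A_{m,n}$) generated by multiplication by $t_i$ (resp. $t_i^{\pm1}$), $\xi_j$ and by $\partial_{t_i}=\partial/\partial t_i$, $\partial_{\xi_j}=\partial/\partial\xi_j$. $\mathfrak{gl}(m,n)$ has matrix units $E_{a,b}$, even part $\mathfrak{gl}(m,n)_0=\mathfrak{gl}_m\oplus\mathfrak{gl}_n$ ($\mathfrak{gl}_m=\mathrm{span}\{E_{i,k}:i,k\le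 m\}$, $\mathfrak{gl}_n\cong\mathrm{span}\{E_{m+l,m+j}\}$ via $E_{l,j}\mapsto E_{m+l,m+j}$), odd part spanned by $E_{i,m+j},E_{m+j,i}$. There is a Lie superalgebra homomorphism $\pi:W\to K\otimes U(\mathfrak{gl}(m,n))$ with $\pi(t^\alpha\xi_I\partial_{t_i})=t^\alpha\xi_I\partial_{t_i}\otimes1+\sum_{s=1}^m\partial_{t_s}(t^\alpha\xi_I)\otimes E_{s,i}+(-1)^{|I|-1}\sum_{l=1}^n\partial_{\xi_l}(t^\alpha\xi_I)\otimes E_{m+l,i}$, $\pi(t^\alpha\xi_I\partial_{\xi_j})=t^\alpha\xi_I\partial_{\xi_j}\otimes1+\sum_{s=1}^m\partial_{t_s}(t^\alpha\xi_I)\otimes E_{s,m+j}+(-1)^{|I|-1}\sum_{l=1}^n\partial_{\xi_l}(t^\alpha\xi_I)\otimes E_{m+l,m+j}$ (here $t^\alpha$ with $\alpha\in\mathbb{Z}_{\ge0}^m$ resp. $\mathbb{Z}^m$, $\xi_I$ the increasing product over $I\subset\{1,\dots,n\}$, and derivatives of $t^\alpha\xi_I$ are multiplication operators), and for a $K$-module $P$ and a $\mathfrak{gl}(m,n)$-module $M$, $F(P,M)=P\otimes M$ is a $W$-module via $x\cdot(u\otimes v)=\pi(x)(u\otimes v)$, $(a\otimes b)(u\otimes v)=(-1)^{|b||u|}au\otimes bv$. For $\lambda\in\mathbb{C}^n$: $e_1,\dots,e_n$ standard basis of $\mathbb{Z}^n$, $|\mu|=\sum_j\mu_j$, $\mathbf{0}=(0,\dots,0)$;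 $S(\lambda)=X_1\times\dots\times X_n$ with $X_j=\lambda_j+\mathbb{Z}$ if $\lambda_j\notin\mathbb{Z}$, $X_j=\mathbb{Z}_{\ge0}$ if $\lambda_j\in\mathbb{Z}_{\ge0}$, $X_j=\{-1,-2,\dots\}$ if $\lambda_j\in\{-1,-2,\dots\}$; $W(\lambda)$ has basis $\{y(\lambda'):\lambda'\in S(\lambda)\}$, $y(\mu)=0$ for $\mu\notin S(\lambda)$, $\mathfrak{gl}_n$ acting by $E_{l,j}y(\lambda')=\lambda'_jy(\lambda'-e_j+e_l)$. $V(r)=\Lambda^r(\mathbb{C}^m)$ with natural $\mathfrak{gl}_m$-action ($e_1,\dots,e_m$ standard basis of $\mathbb{C}^m$). $M(\lambda)=\bigoplus_{r=0}^mV(r)\otimes W(\lambda)$, spanned by $e_{i_1}\wedge\dots\wedge e_{i_r}y(\lambda')$, with parity $|\lambda-\lambda'|\bmod 2$; it is a $\mathfrak{gl}(m,n)$-module with $\mathfrak{gl}(m,n)_0$ acting by tensor product and $E_{i,m+j}\cdot e_{i_1}\wedge\dots\wedge e_{i_r}y(\lambda')=(-1)^r\lambda'_je_i\wedge e_{i_1}\wedge\dots\wedge e_{i_r}y(\lambda'-e_j)$, $E_{m+j,i}\cdot e_{i_1}\wedge\dots\wedge e_{i_r}y(\lambda')=0$ if $i\notin\{i_1,\dots,i_r\}$ and $=(-1)^{r-s}e_{i_1}\wedge\dots\wedge\widehat{e_{i_s}}\wedge\dots\wedge e_{i_r}y(\lambda'+e_j)$ if $i=i_s$. Notation: $L(V(m)\otimes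 N(\lambda))$ denotes the $\mathfrak{gl}(m,n)$-submodule $\mathrm{span}\{e_{i_1}\wedge\dots\wedge e_{i_r}y(\lambda'):0\le r\le m,\ \lambda'\in S(\lambda),\ m+|\lambda|=r+|\lambda'|\}$ of $M(\lambda)$, and for $r\in\{0,\dots,m\}$, $L(V(r)\otimes N(\mathbf{0}))$ denotes the submodule $\mathrm{span}\{e_{i_1}\wedge\dots\wedge e_{i_{r'}}y(\alpha):0\le r'\le r,\ \alpha\in\mathbb{Z}_{\ge0}^n,\ r=r'+|\alpha|\}$ of $M(\mathbf{0})$ (these are simple modules isomorphic to the simple tops of the corresponding Kac modules). Define operators on $M(\lambda)$: $e_i\wedge(e_{i_1}\wedge\dots\wedge e_{i_r}y(\lambda'))=e_i\wedge e_{i_1}\wedge\dots\wedge e_{i_r}y(\lambda')$ and $\tau_j(e_{i_1}\wedge\dots\wedge e_{i_r}y(\lambda'))=(-1)^re_{i_1}\wedge\dots\wedge e_{i_r}y(\lambda'+e_j)$. Define $\sigma_\lambda:F(P,M(\lambda))\to F(P,M(\lambda))$ by $\sigma_\lambda(u\otimes v)=\sum_{s=1}^m\partial_{t_s}u\otimes e_s\wedge v+(-1)^{|u|-1}\sum_{l=1}^n\partial_{\xi_l}u\otimes\tau_l(v)$. *)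

(* Defs.v *)
From HB Require Import structures.
From mathcomp Require Import all_boot all_order all_algebra.
From mathcomp Require Import boolp reals complex.
Set Implicit Arguments. Unset Strict Implicit. Unset Printing Implicit Defensive.
Import Order.TTheory GRing.Theory Num.Theory.
Local Open Scope ring_scope.

Section Defs.
Variables (R : realType) (m n : nat).
Local Notation C := (R[i]).

Definition isIntC (x : C) : Prop := exists z : int, x = z%:~R.
Definition isNatC (x : C) : Prop := exists k : nat, x = k%:R.
Definition isNegIntC (x : C) : Prop := exists k : nat, x = - (k.+1)%:R.

Definition in_S (lam lam' : {ffun 'I_n -> C}) : Prop :=
  forall j : 'I_n,
    (~ isIntC (lam j) /\ isIntC (lam' j - lam j))
    \/ (isNatC (lam j) /\ isNatC (lam' j))
    \/ (isNegIntC (lam j) /\ isNegIntC (lam' j)).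

(* Basis labels of M(lam): e_{i_1} /\ ... /\ e_{i_r} y(lam') with
   i_1 < ... < i_r is labelled by (I, lam') with I = {i_1,...,i_r}.
   Labels with lam' \notin S(lam) stand for y(lam') = 0. *)
Definition basis := ({set 'I_m} * {ffun 'I_n -> C})%type.

Definition validb (lam : {ffun 'I_n -> C}) (b : basis) : bool :=
  `[< in_S lam b.2 >].

Definition unitv (l : 'I_n) : {ffun 'I_n -> C} := [ffun j => (j == l)%:R].

(* An operator-level description of a (Z2-graded) module over
   K^+_{m,n} (laurent = false) or K_{m,n} (laurent = true):
   par0 = projection onto the even part, tm i = t_i, tinv i = t_i^{-1}
   (only relevant when laurent = true), dt i = d/dt_i, xi j = xi_j,
   dxi j = d/dxi_j. *)
Record Kdata (P : Type) := KData {
  par0 : P -> P;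
  tm : 'I_m -> P -> P;
  tinv : 'I_m -> P -> P;
  dt : 'I_m -> P -> P;
  xi : 'I_n -> P -> P;
  dxi : 'I_n -> P -> P }.

Definition lin_op (P : lmodType C) (f : P -> P) : Prop :=
  forall (a : C) (u v : P), f (a *: u + v) = a *: f u + f v.

Definition even_op (P : lmodType C) (p0 f : P -> P) : Prop :=
  forall u, p0 (f u) = f (p0 u).
Definition odd_op (P : lmodType C) (p0 f : P -> P) : Prop :=
  forall u, p0 (f u) = f (u - p0 u).

Definition is_Kmodule (laurent : bool) (P : lmodType C) (D : Kdata P) : Prop :=
  [/\
      lin_op (par0 D) /\
      (forall i, lin_op (tm D i) /\ lin_op (tinv D i) /\ lin_op (dt D i)) /\
      (forall j, lin_op (xi D j) /\ lin_op (dxi D j)),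
      (forall u, par0 D (par0 D u) = par0 D u) /\
      (forall i, even_op (par0 D) (tm D i) /\ even_op (par0 D) (dt D i) /\
                 (laurent -> even_op (par0 D) (tinv D i))) /\
      (forall j, odd_op (par0 D) (xi D j) /\ odd_op (par0 D) (dxi D j)),
      (forall i k u,
          tm D i (tm D k u) = tm D k (tm D i u) /\
          dt D i (dt D k u) = dt D k (dt D i u) /\
          dt D i (tm D k u) - tm D k (dt D i u) = (i == k)%:R *: u),
      (forall j k u,
          xi D j (xi D k u) = - xi D k (xi D j u) /\
          dxi D j (dxi D k u) = - dxi D k (dxi D j u) /\
          dxi D j (xi D k u) + xi D k (dxi D j u) = (j == k)%:R *: u)
    &
      (forall i j u,
          tm D i (xi D j u) = xi D j (tm D i u) /\
          tm D i (dxi D j u) = dxi D j (tm D i u) /\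
          dt D i (xi D j u) = xi D j (dt D i u) /\
          dt D i (dxi D j u) = dxi D j (dt D i u)) /\
      (laurent -> forall i u,
          tm D i (tinv D i u) = u /\ tinv D i (tm D i u) = u)].

Definition graded_submodule (laurent : bool) (P : lmodType C) (D : Kdata P)
    (S : P -> Prop) : Prop :=
  [/\ S 0,
      (forall (a : C) u v, S u -> S v -> S (a *: u + v)),
      (forall u, S u -> S (par0 D u)),
      (forall i u, S u -> S (tm D i u) /\ S (dt D i u) /\
                          (laurent -> S (tinv D i u)))
    & (forall j u, S u -> S (xi D j u) /\ S (dxi D j u))].

Definition simple_Kmodule (laurent : bool) (P : lmodType C) (D : Kdata P) : Prop :=
  [/\ is_Kmodule laurent D,
      (exists u : P, u != 0)
    & forall S, graded_submodule laurent D S ->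
        (forall u, S u) \/ (forall u, S u -> u = 0)].

(* An element of P (x) M(lam) is represented as a formal finite sum
   \sum_k u_k (x) b_k, i.e. a list of pairs (u_k, b_k). *)
Section Tensor.
Variables (P : lmodType C) (D : Kdata P) (lam : {ffun 'I_n -> C}).

Definition tzero (s : seq (P * basis)) : Prop :=
  forall b : basis, validb lam b -> \sum_(x <- s | x.2 == b) x.1 = 0.

Definition hcomp (p : bool) (u : P) : P := if p then u - par0 D u else par0 D u.

(* e_s /\ (e_I y(lam')) = wedge_coef s I * e_{I u {s}} y(lam') *)
Definition wedge_coef (s : 'I_m) (I : {set 'I_m}) : C :=
  if s \in I then 0 else (-1) ^+ #|[set i in I | (i < s)%N]|.

(* sigma_lam on a pure tensor u (x) b, b = (I, lam'), written out for the
   homogeneous components of u (|u| = p):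
   sum_s d_{t_s} u (x) e_s /\ b
   + (-1)^{p-1} sum_l d_{xi_l} u (x) tau_l(b),
   tau_l(e_I y(lam')) = (-1)^{|I|} e_I y(lam' + e_l). *)
Definition sigma_pure (x : P * basis) : seq (P * basis) :=
  let u := x.1 in let I := x.2.1 in let mu := x.2.2 in
  [seq (wedge_coef s I *: dt D s u, (s |: I, mu)) | s <- enum 'I_m]
  ++ [seq (((if p then 1 else -1) * (-1) ^+ #|I|) *: dxi D l (hcomp p u),
           (I, [ffun j => mu j + unitv l j])) | l <- enum 'I_n,
                                                p <- [:: false; true]].

(* linear extension; terms y(mu) with mu \notin S(lam) are 0 *)
Definition sigma (s : seq (P * basis)) : seq (P * basis) :=
  flatten [seq sigma_pure x | x <- s & validb lam x.2].

End Tensor.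

(* for r = m: span{e_I y(lam') : lam' \in S(lam), m + |lam| = |I| + |lam'|};
   for r < m (where lam = 0): span{e_I y(alpha) : alpha \in N^n, r = |I| + |alpha|} *)
Definition inL (r : nat) (lam : {ffun 'I_n -> C}) (b : basis) : Prop :=
  if r == m then
    in_S lam b.2 /\
    (m%:R + \sum_j lam j = (#|b.1|)%:R + \sum_j b.2 j :> C)
  else
    exists alpha : 'I_n -> nat,
      (forall j, b.2 j = (alpha j)%:R) /\ r = (#|b.1| + \sum_j alpha j)%N.

End Defs.

(* Main.v *)
Require Import Defs.
From HB Require Import structures.
From mathcomp Require Import all_boot all_order all_algebra.
From mathcomp Require Import boolp reals complex.
Import Order.TTheory GRing.Theory Num.Theory.
Local Open Scope ring_scope.
Set Implicit Arguments. Unset Strict Implicit. Unset Printing Implicit Defensive.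

Section Lin.
Variables (R : realType) (P : lmodType R[i]).
Implicit Types (f : P -> P) (u v : P).

Lemma lin0 f : lin_op f -> f 0 = 0.
Proof.
move=> H; have := H 1 0 0; rewrite !scale1r addr0 => e.
by apply: (@addrI _ (f 0)); rewrite addr0 -e.
Qed.

Lemma linZ f a u : lin_op f -> f (a *: u) = a *: f u.
Proof. by move=> H; have := H a u 0; rewrite (lin0 H) !addr0. Qed.

Lemma linD f u v : lin_op f -> f (u + v) = f u + f v.
Proof. by move=> H; have := H 1 u v; rewrite !scale1r. Qed.

Lemma linN f u : lin_op f -> f (- u) = - f u.
Proof. by move=> H; rewrite -scaleN1r linZ // scaleN1r. Qed.

Lemma linB f u v : lin_op f -> f (u - v) = f u - f v.
Proof. by move=> H; rewrite linD // linN. Qed.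

Lemma self_opp u : u = - u -> u = 0.
Proof.
move=> e.
have h2 : (2%:R : R[i]) *: u = 0 by rewrite scaler_nat mulr2n {2}e subrr.
have nz : (2%:R : R[i]) != 0 by rewrite pnatr_eq0.
by rewrite -[u]scale1r -(mulVf nz) -scalerA h2 scaler0.
Qed.

Lemma antisym_sum (T : Type) (r : seq T) (F : T -> T -> P) :
  (forall i j, F j i = - F i j) -> \sum_(i <- r) \sum_(j <- r) F i j = 0.
Proof.
move=> H; apply: self_opp.
rewrite {1}exchange_big /= -sumrN; apply: eq_bigr => j _.
rewrite -sumrN; apply: eq_bigr => i _; by rewrite H.
Qed.

End Lin.

Section Main.
Variables (R : realType) (m n : nat) (laurent : bool) (P : lmodType R[i]).
Variable (D : Kdata m n P).
Hypothesis HK : is_Kmodule laurent D.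
Local Notation C := (R[i]).

Let p0 := par0 D.

Lemma lin_p0 : lin_op p0.
Proof. by case: HK => [[]]. Qed.
Lemma lin_dt i : lin_op (dt D i).
Proof. by case: HK => [[_ [/(_ i) [_ [_ ?]] _]]]. Qed.
Lemma lin_tm i : lin_op (tm D i).
Proof. by case: HK => [[_ [/(_ i) [? _] _]]]. Qed.
Lemma lin_xi j : lin_op (xi D j).
Proof. by case: HK => [[_ [_ /(_ j) [? _]]]]. Qed.
Lemma lin_dxi j : lin_op (dxi D j).
Proof. by case: HK => [[_ [_ /(_ j) [_ ?]]]]. Qed.
Lemma p0_idem u : p0 (p0 u) = p0 u.
Proof. by case: HK => _ [+ _] _ _ _; apply. Qed.
Lemma p0_dt i u : p0 (dt D i u) = dt D i (p0 u).
Proof. by case: HK => _ [_ [/(_ i) [_ [+ _]] _]] _ _ _; apply. Qed.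
Lemma p0_dxi j u : p0 (dxi D j u) = dxi D j (u - p0 u).
Proof. by case: HK => _ [_ [_ /(_ j) [_ +]]] _ _ _; apply. Qed.
Lemma dt_comm i k u : dt D i (dt D k u) = dt D k (dt D i u).
Proof. by case: HK => _ _ /(_ i k u) [_ [+ _]] _ _. Qed.
Lemma dt_tm i u : dt D i (tm D i u) - tm D i (dt D i u) = u.
Proof. by case: HK => _ _ /(_ i i u) [_ [_ ->]] _ _; rewrite eqxx scale1r. Qed.
Lemma dxi_acomm j k u : dxi D j (dxi D k u) = - dxi D k (dxi D j u).
Proof. by case: HK => _ _ _ /(_ j k u) [_ [+ _]] _. Qed.
Lemma dxi_xi j u : dxi D j (xi D j u) + xi D j (dxi D j u) = u.
Proof. by case: HK => _ _ _ /(_ j j u) [_ [_ ->]] _; rewrite eqxx scale1r. Qed.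
Lemma dt_dxi i j u : dt D i (dxi D j u) = dxi D j (dt D i u).
Proof. by case: HK => _ _ _ _ [/(_ i j u) [_ [_ [_ ->]]] _]. Qed.

Lemma dxi_sq j u : dxi D j (dxi D j u) = 0.
Proof. by apply: self_opp; rewrite {1}dxi_acomm. Qed.

Definition eps u := u - p0 u - p0 u.

Lemma eps_dt i u : eps (dt D i u) = dt D i (eps u).
Proof. by rewrite /eps !(linB _ _ (lin_dt i)) p0_dt. Qed.

Lemma eps_dxi j u : eps (dxi D j u) = - dxi D j (eps u).
Proof.
rewrite /eps p0_dxi !(linB _ _ (lin_dxi j)).
set a := dxi D j u; set b := dxi D j (p0 u).
by rewrite !opprB subrKC.
Qed.

Lemma eps_eps u : eps (eps u) = u.
Proof.
have hp : p0 (eps u) = - p0 u.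
  by rewrite /eps !(linB _ _ lin_p0) p0_idem subrr sub0r.
rewrite {1}/eps hp opprK /eps; by rewrite subrK subrK.
Qed.

Lemma eps_Z a u : eps (a *: u) = a *: eps u.
Proof. by rewrite /eps (linZ _ _ lin_p0) !scalerBr. Qed.


Variable lam : {ffun 'I_n -> C}.

Definition coef (t : seq (P * basis R m n)) (b : basis R m n) : P :=
  \sum_(x <- t | x.2 == b) x.1.

Definition shift (nu : {ffun 'I_n -> C}) (l : 'I_n) : {ffun 'I_n -> C} :=
  [ffun j => nu j + unitv R l j].

Definition Tf v (J : {set 'I_m}) (nu : {ffun 'I_n -> C}) B beta :=
  \sum_(s <- enum 'I_m) (if (s |: J == B) && (nu == beta)
                         then wedge_coef R s J *: dt D s v else 0).
Definition Xf v (J : {set 'I_m}) (nu : {ffun 'I_n -> C}) B beta :=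
  \sum_(l <- enum 'I_n) (if (J == B) && (shift nu l == beta)
                         then (-1) ^+ #|J| *: dxi D l (eps v) else 0).

Lemma hcomp_sum k l v :
  \sum_(p <- [:: false; true])
     (((if p then 1 else -1) * (-1) ^+ k) *: dxi D l (hcomp D p v))
  = (-1) ^+ k *: dxi D l (eps v).
Proof.
rewrite !big_cons big_nil /= /hcomp addr0 !mul1r mulN1r.
by rewrite /eps !(linB _ _ (lin_dxi l)) scaleNr addrC -scalerBr.
Qed.

Lemma CP v J nu B beta :
  coef (sigma_pure D (v, (J, nu))) (B, beta) = Tf v J nu B beta + Xf v J nu B beta.
Proof.
rewrite /coef /sigma_pure big_mkcond big_cat big_map big_allpairs_dep /=.
congr (_ + _); apply: eq_bigr => l _ /=.
rewrite /shift xpair_eqE; case: ifP => _; last by rewrite big1_eq.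
exact: hcomp_sum.
Qed.

Lemma Tf_add v1 v2 J nu B beta :
  Tf v1 J nu B beta + Tf v2 J nu B beta = Tf (v1 + v2) J nu B beta.
Proof.
rewrite /Tf -big_split; apply: eq_bigr => s _ /=.
by case: ifP; rewrite ?addr0 // (linD _ _ (lin_dt s)) scalerDr.
Qed.

Lemma eps_D u v : eps (u + v) = eps u + eps v.
Proof.
rewrite /eps (linD _ _ lin_p0) opprD [u + v + _]addrACA.
by rewrite [LHS]addrACA.
Qed.

Lemma Xf_add v1 v2 J nu B beta :
  Xf v1 J nu B beta + Xf v2 J nu B beta = Xf (v1 + v2) J nu B beta.
Proof.
rewrite /Xf -big_split; apply: eq_bigr => s _ /=.
by case: ifP; rewrite ?addr0 // eps_D (linD _ _ (lin_dxi s)) scalerDr.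
Qed.


Lemma sum_sigma (g : P * basis R m n -> P) t :
  \sum_(y <- sigma D lam t) g y
  = \sum_(x <- t | validb lam x.2) \sum_(y <- sigma_pure D x) g y.
Proof. by rewrite /sigma big_flatten /= big_map big_filter. Qed.

Lemma coef_sigma t b :
  coef (sigma D lam t) b = \sum_(x <- t | validb lam x.2) coef (sigma_pure D x) b.
Proof.
rewrite /coef big_mkcond sum_sigma; apply: eq_bigr => x _.
by rewrite [RHS]big_mkcond.
Qed.

Lemma card_lt_U1 (a b : 'I_m) (I : {set 'I_m}) : a \notin I ->
  #|[set i in a |: I | (i < b)%N]| = ((a < b)%N + #|[set i in I | (i < b)%N]|)%N.
Proof.
move=> aI; case h: (a < b)%N.
  have -> : [set i in a |: I | (i < b)%N] = a |: [set i in I | (i < b)%N].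
    by apply/setP => i; rewrite !inE; case: (eqVneq i a) => [->|] //=; rewrite h.
  by rewrite cardsU1 inE (negbTE aI).
rewrite add0n; apply: eq_card => i; rewrite !inE.
by case: (eqVneq i a) => [->|] //=; rewrite h (negbTE aI).
Qed.

Lemma wsign (s s' : 'I_m) I :
  wedge_coef R s (s' |: I) * wedge_coef R s' I
  = - (wedge_coef R s' (s |: I) * wedge_coef R s I).
Proof.
rewrite /wedge_coef.
have [sI|sI] := boolP (s \in I).
  by rewrite !in_setU1 sI orbT /= mul0r mulr0 oppr0.
have [s'I|s'I] := boolP (s' \in I).
  by rewrite !in_setU1 s'I orbT /= mul0r mulr0 oppr0.
case: (eqVneq s s') => [<-|ne].
  by rewrite !in_setU1 eqxx /= !mul0r oppr0.
have ne' : s' != s by rewrite eq_sym.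
rewrite !in_setU1 (negbTE sI) (negbTE s'I) (negbTE ne) (negbTE ne') /=.
rewrite !card_lt_U1 // !exprD.
case: (ltngtP s s') => h /=.
- by rewrite expr0 expr1 mul1r mulN1r mulNr opprK mulrC.
- by rewrite expr0 expr1 mul1r mulN1r mulNr mulrC.
- by move: ne; rewrite (ord_inj h) eqxx.
Qed.

Lemma TT u I mu B beta :
  \sum_(s <- enum 'I_m) Tf (wedge_coef R s I *: dt D s u) (s |: I) mu B beta = 0.
Proof.
rewrite /Tf; apply: antisym_sum => s s'.
rewrite setUCA; case: ifP => _; last by rewrite oppr0.
rewrite !(linZ _ _ (lin_dt _)) !scalerA wsign scaleNr.
by rewrite [dt D s (dt D s' u)]dt_comm.
Qed.

Lemma shift_comm nu a b : shift (shift nu a) b = shift (shift nu b) a.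
Proof. by apply/ffunP => j; rewrite !ffunE addrAC. Qed.

Lemma valid_mid mu l l' : in_S lam mu -> in_S lam (shift (shift mu l) l') ->
  l != l' -> in_S lam (shift mu l).
Proof.
move=> h1 h2 ne j.
have : shift mu l j = mu j \/ shift mu l j = shift (shift mu l) l' j.
  rewrite /shift /unitv !ffunE.
  case: (eqVneq j l) => [->|jl] /=; [right | left].
    by rewrite (negbTE ne) addr0.
  by rewrite addr0.
by case=> ->; [exact: h1 | exact: h2].
Qed.

Lemma sign_sq k : (-1) ^+ k * (-1) ^+ k = 1 :> C.
Proof. by rewrite -exprMn mulrNN mulr1 expr1n. Qed.

Lemma XX u I mu B beta : in_S lam mu -> in_S lam beta ->
  \sum_(l <- enum 'I_n) (if validb lam (I, shift mu l)
     then Xf ((-1) ^+ #|I| *: dxi D l (eps u)) I (shift mu l) B beta else 0) = 0.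
Proof.
move=> hmu hbeta.
have e : forall l, (if validb lam (I, shift mu l)
     then Xf ((-1) ^+ #|I| *: dxi D l (eps u)) I (shift mu l) B beta else 0)
   = \sum_(l' <- enum 'I_n) (if validb lam (I, shift mu l) then
       (if (I == B) && (shift (shift mu l) l' == beta)
        then - dxi D l' (dxi D l u) else 0) else 0).
  move=> l; rewrite /Xf; case: ifP => _; last by rewrite big1_eq.
  apply: eq_bigr => l' _; case: ifP => // _.
  rewrite eps_Z eps_dxi eps_eps (linZ _ _ (lin_dxi l')) (linN _ (lin_dxi l')).
  by rewrite scalerA sign_sq scale1r.
rewrite (eq_bigr _ (fun l _ => e l)); apply: antisym_sum => l l'.
case: (eqVneq l l') => [<-|ne].
  by rewrite dxi_sq oppr0 !if_same oppr0.
rewrite (shift_comm mu l' l).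
have [c|c] := boolP ((I == B) && (shift (shift mu l) l' == beta)); last first.
  by rewrite !if_same oppr0.
have [_ /eqP hb] := andP c.
have v1 : validb lam (I, shift mu l).
  apply/asboolP; apply: (valid_mid hmu _ ne); by rewrite hb.
have v2 : validb lam (I, shift mu l').
  apply/asboolP; rewrite eq_sym in ne; apply: (valid_mid hmu _ ne).
  by rewrite shift_comm hb.
by rewrite v1 v2 [dxi D l (dxi D l' u)]dxi_acomm opprK.
Qed.


Lemma TXXT u I mu B beta : in_S lam beta ->
  \sum_(s <- enum 'I_m) Xf (wedge_coef R s I *: dt D s u) (s |: I) mu B beta
  + \sum_(l <- enum 'I_n) (if validb lam (I, shift mu l)
       then Tf ((-1) ^+ #|I| *: dxi D l (eps u)) I (shift mu l) B beta else 0)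
  = 0.
Proof.
move=> hb.
have e : forall l, (if validb lam (I, shift mu l)
       then Tf ((-1) ^+ #|I| *: dxi D l (eps u)) I (shift mu l) B beta else 0)
   = \sum_(s <- enum 'I_m) (if (s |: I == B) && (shift mu l == beta)
       then wedge_coef R s I *: dt D s ((-1) ^+ #|I| *: dxi D l (eps u)) else 0).
  move=> l; rewrite /Tf; case: ifP => // hv.
  rewrite big1_seq // => s _; case: ifP => // /andP [_ /eqP hsb].
  by rewrite hsb /validb /= asboolT in hv.
rewrite (eq_bigr _ (fun l _ => e l)) /Xf [X in _ + X]exchange_big /= -big_split /=.
apply: big1 => s _; rewrite -big_split /=; apply: big1 => l _.
case: ifP => _; first last. by rewrite addr0.
rewrite eps_Z eps_dt !(linZ _ _ (lin_dxi _)) (linZ _ _ (lin_dt _)) -dt_dxi.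
rewrite !scalerA -scalerDl.
rewrite /wedge_coef; case: ifP => sI; first by rewrite mulr0 mul0r addr0 scale0r.
set x := (-1) ^+ #|_|.
rewrite cardsU1 sI /= add1n exprS mulN1r mulNr [x * _]mulrC addNr.
by rewrite scale0r.
Qed.


Lemma core x B beta : validb lam x.2 -> in_S lam beta ->
  coef (sigma D lam (sigma_pure D x)) (B, beta) = 0.
Proof.
case: x => u [I mu] /= hv hb.
have hmu : in_S lam mu by apply/asboolP.
have E1 : forall s : 'I_m,
   (if validb lam (s |: I, mu) then
      coef (sigma_pure D (wedge_coef R s I *: dt D s u, (s |: I, mu))) (B, beta)
    else 0)
   = Tf (wedge_coef R s I *: dt D s u) (s |: I) mu B beta
     + Xf (wedge_coef R s I *: dt D s u) (s |: I) mu B beta.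
  by move=> s; rewrite (_ : validb lam (s |: I, mu) = true) // CP.
have E2 : forall l : 'I_n,
   \sum_(p <- [:: false; true])
     (if validb lam (I, shift mu l) then
        coef (sigma_pure D (((if p then 1 else -1) * (-1) ^+ #|I|) *:
                 dxi D l (hcomp D p u), (I, shift mu l))) (B, beta)
      else 0)
   = (if validb lam (I, shift mu l) then
        Tf ((-1) ^+ #|I| *: dxi D l (eps u)) I (shift mu l) B beta
        + Xf ((-1) ^+ #|I| *: dxi D l (eps u)) I (shift mu l) B beta
      else 0).
  move=> l; case: ifP => _; last by rewrite big1_eq.
  rewrite -hcomp_sum !big_cons !big_nil !addr0 !CP addrACA Tf_add Xf_add.
  done.
rewrite coef_sigma /sigma_pure big_mkcond big_cat big_map big_allpairs_dep /=.
rewrite (eq_bigr _ (fun s _ => E1 s)) (eq_bigr _ (fun l _ => E2 l)).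
have E3 : forall l : 'I_n,
   (if validb lam (I, shift mu l) then
        Tf ((-1) ^+ #|I| *: dxi D l (eps u)) I (shift mu l) B beta
        + Xf ((-1) ^+ #|I| *: dxi D l (eps u)) I (shift mu l) B beta
      else 0)
   = (if validb lam (I, shift mu l) then
        Tf ((-1) ^+ #|I| *: dxi D l (eps u)) I (shift mu l) B beta else 0)
     + (if validb lam (I, shift mu l) then
        Xf ((-1) ^+ #|I| *: dxi D l (eps u)) I (shift mu l) B beta else 0).
  by move=> l; case: ifP; rewrite ?addr0.
rewrite (eq_bigr _ (fun l _ => E3 l)) !big_split /=.
rewrite TT (XX _ _ _ hmu hb) add0r addr0.
exact: TXXT.
Qed.

Lemma part1 s : tzero lam (sigma D lam (sigma D lam s)).
Proof.
move=> [B beta] hb.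
change (coef (sigma D lam (sigma D lam s)) (B, beta) = 0).
rewrite coef_sigma big_mkcond sum_sigma; apply: big1 => x hx.
rewrite -big_mkcond -coef_sigma; apply: core => //.
exact/asboolP.
Qed.


Lemma isInt_m1 : isIntC (-1 : C).
Proof. by exists (-1); rewrite mulrNz mulr1z. Qed.

Lemma not_nat_m1 : ~ isNatC (-1 : C).
Proof. by case=> k e; have := ler0n C k; rewrite -e ler0N1. Qed.

Lemma not_negint0 : ~ isNegIntC (0 : C).
Proof. by case=> k /eqP; rewrite eq_sym oppr_eq0 pnatr_eq0. Qed.

Lemma classify (x : C) : (~ isIntC x) \/ isNatC x \/ isNegIntC x.
Proof.
case: (pselect (isIntC x)) => [[z ->]|h]; last by left.
right; case: z => k; [left; exists k | right; exists k].
  by rewrite -pmulrn.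
by rewrite NegzE mulrNz -pmulrn.
Qed.

Lemma in_S_refl (nu : {ffun 'I_n -> C}) : in_S nu nu.
Proof.
move=> j; case: (classify (nu j)) => [h|[h|h]].
- by left; split => //; exists 0; rewrite subrr mulr0z.
- by right; left.
- by right; right.
Qed.

Lemma negS (mu : {ffun 'I_n -> C}) : in_S [ffun => -1] mu -> forall j, isNegIntC (mu j).
Proof.
move=> h j; have := h j; rewrite ffunE => -[[h1 _]|[[h1 _]|[_ ?]]] //.
- by case: h1; exact: isInt_m1.
- by case: not_nat_m1.
Qed.

Lemma partA s : lam = [ffun => -1] ->
  (forall x, x \in s -> inL m lam x.2) -> tzero lam (sigma D lam s).
Proof.
move=> hl hs [B beta] hb.
change (coef (sigma D lam s) (B, beta) = 0).
rewrite coef_sigma; apply: big1_seq => -[u [I mu]] /andP [_ xs].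
have := hs _ xs; rewrite /inL eqxx /= => -[hmu hsum].
have hb' : in_S lam beta by apply/asboolP.
rewrite hl in hmu hsum hb'.
have hneg := negS hmu.
have d_ge0 : forall j, 0 <= -1 - mu j.
  by move=> j; have [k ->] := hneg j; rewrite opprK -nat1r addKr ler0n.
rewrite (eq_bigr (fun=> -1)) in hsum; last by move=> j _; rewrite ffunE.
have hsum' : \sum_j (-1 - mu j) = #|I|%:R - m%:R.
  rewrite sumrB (_ : \sum_j (-1 : C) = #|I|%:R + \sum_j mu j - m%:R).
    by rewrite addrAC addrK.
  by rewrite -hsum (addrC (m%:R)) addrK.
have hle : \sum_j (-1 - mu j) <= 0.
  rewrite hsum' subr_le0 ler_nat.
  by apply: leq_trans (max_card _) _; rewrite card_ord.
have h0 : \sum_j (-1 - mu j) = 0.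
  by apply/le_anti; rewrite hle sumr_ge0 // => j _; exact: d_ge0.
have hmu1 : forall j, mu j = -1.
  move=> j; have := psumr_eq0P (fun i _ => d_ge0 i) h0 (i:=j) isT.
  by move/eqP; rewrite subr_eq0 => /eqP <-.
have hI : I = setT.
  have hc : #|I| = m.
    by move: hsum'; rewrite h0 => /eqP; rewrite eq_sym subr_eq0 eqr_nat => /eqP.
  by apply/eqP; rewrite eqEcard subsetT cardsT card_ord hc leqnn.
rewrite CP; rewrite (_ : Tf _ _ _ _ _ = 0) ?add0r.
  apply: big1 => l _; case: ifP => // /andP [_ /eqP e].
  have := negS hb' l; rewrite -e /shift /unitv !ffunE hmu1 eqxx /= addNr.
  by move/not_negint0.
apply: big1 => s0 _.
by rewrite hI /wedge_coef in_setT scale0r if_same.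
Qed.


Lemma shift_eq (nu : {ffun 'I_n -> C}) a b : (shift nu a == shift nu b) = (a == b).
Proof.
apply/eqP/eqP => [e|->//]; have := congr1 (fun f : {ffun 'I_n -> C} => f a) e.
rewrite /shift /unitv !ffunE eqxx => /addrI.
by case: eqVneq => // _ /eqP; rewrite oner_eq0.
Qed.

Lemma valid_shift l : lam l != -1 -> in_S lam (shift lam l).
Proof.
move=> hl j; rewrite /shift /unitv !ffunE.
case: (eqVneq j l) => [->|jl] /=; last by rewrite addr0; exact: in_S_refl.
rewrite mulr1n.
case: (classify (lam l)) => [h|[[k e]|[k e]]].
- left; split => //; exists 1.
  by rewrite addrAC subrr add0r mulr1z.
- by right; left; split; [exists k | exists k.+1]; rewrite e ?natr1.
- case: k e => [|k] e; first by rewrite e mulr1n eqxx in hl.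
  right; right; split; first by exists k.+1.
  by exists k; rewrite e -natr1 opprD addrNK.
Qed.

Lemma exists_dxi l : (exists w : P, w != 0) -> exists u, dxi D l (eps u) != 0.
Proof.
case=> w hw.
have [v hv] : exists v, dxi D l v != 0.
  case: (eqVneq (dxi D l w) 0) => h; last by exists w.
  exists (xi D l w); have := dxi_xi l w.
  by rewrite h (lin0 (lin_xi l)) addr0 => ->.
by exists (eps v); rewrite eps_eps.
Qed.

Lemma exists_dt s : (exists w : P, w != 0) -> exists u, dt D s u != 0.
Proof.
case=> w hw.
case: (eqVneq (dt D s w) 0) => h; last by exists w.
exists (tm D s w); have := dt_tm s w.
by rewrite h (lin0 (lin_tm s)) subr0 => ->.
Qed.

Lemma partB : (exists w : P, w != 0) -> lam != [ffun => -1] ->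
  ~ (forall s, (forall x, x \in s -> inL m lam x.2) -> tzero lam (sigma D lam s)).
Proof.
move=> hw hneq H.
have [l hl] : exists l, lam l != -1.
  case: (boolP [exists l, lam l != -1]) => [/existsP //|/existsPn hall].
  case/eqP: hneq; apply/ffunP => j; rewrite ffunE.
  by apply/eqP; move: (hall j); rewrite negbK.
have [u hu] := exists_dxi l hw.
have hin : forall x : P * basis R m n, x \in [:: (u, (setT, lam))] -> inL m lam x.2.
  move=> x; rewrite mem_seq1 => /eqP -> /=; rewrite /inL eqxx; split.
    exact: in_S_refl.
  by rewrite cardsT card_ord.
have := H _ hin (setT, shift lam l) (asboolT (valid_shift hl)).
change (coef (sigma D lam [:: (u, (setT, lam))]) (setT, shift lam l) = 0 -> False).
rewrite coef_sigma big_cons big_nil /validb /= (asboolT (in_S_refl lam)) addr0 CP.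
rewrite (_ : Tf _ _ _ _ _ = 0) ?add0r; last first.
  by apply: big1 => s0 _; rewrite /wedge_coef in_setT scale0r if_same.
rewrite /Xf (bigD1_seq l) ?mem_enum ?enum_uniq //= !eqxx /=.
rewrite big1_seq ?addr0; last first.
  by move=> l0 /andP [hl0 _]; rewrite shift_eq (negbTE hl0).
by move/eqP; rewrite scaler_eq0 signr_eq0 /= (negbTE hu).
Qed.

Lemma partC r : (exists w : P, w != 0) -> (r < m)%N -> lam = [ffun => 0] ->
  ~ (forall s, (forall x, x \in s -> inL r lam x.2) -> tzero lam (sigma D lam s)).
Proof.
move=> hw hrm hl0 H.
pose I0 := [set widen_ord (ltnW hrm) i | i : 'I_r].
pose s0 : 'I_m := Ordinal hrm.
have s0I : s0 \notin I0.
  apply/imsetP => -[i _ /(congr1 val) /= e].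
  by move: (ltn_ord i); rewrite -e ltnn.
have cI0 : #|I0| = r.
  rewrite card_imset ?card_ord //.
  by move=> a b /(congr1 val) /= /val_inj.
have [u hu] := exists_dt s0 hw.
have hin : forall x : P * basis R m n, x \in [:: (u, (I0, lam))] -> inL r lam x.2.
  move=> x; rewrite mem_seq1 => /eqP -> /=; rewrite /inL.
  rewrite (ltn_eqF hrm); exists (fun=> 0%N); split.
    by move=> j; rewrite hl0 ffunE.
  by rewrite big1_eq addn0.
have := H _ hin (s0 |: I0, lam) (asboolT (in_S_refl lam)).
change (coef (sigma D lam [:: (u, (I0, lam))]) (s0 |: I0, lam) = 0 -> False).
rewrite coef_sigma big_cons big_nil /validb /= (asboolT (in_S_refl lam)) addr0 CP.
have nI : (I0 == s0 |: I0) = false.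
  by apply/negbTE/eqP => e; move: s0I; rewrite {1}e setU11.
rewrite (_ : Xf _ _ _ _ _ = 0) ?addr0; last first.
  by apply: big1 => l _; rewrite nI.
rewrite /Tf (bigD1_seq s0) ?mem_enum ?enum_uniq //= !eqxx /=.
rewrite big1_seq ?addr0; last first.
  move=> s1 /andP [hs1 _]; case: ifP => // /andP [/eqP e _].
  have : s1 \in s0 |: I0 by rewrite -e setU11.
  rewrite in_setU1 (negbTE hs1) /= => s1I.
  have : s0 \in s1 |: I0 by rewrite e setU11.
  by rewrite in_setU1 (negbTE s0I) orbF eq_sym (negbTE hs1).
rewrite /wedge_coef (negbTE s0I).
by move/eqP; rewrite scaler_eq0 signr_eq0 /= (negbTE hu).
Qed.

End Main.

Theorem lemma4p2 (R : realType) (m n : nat) (Hmn : (0 < m + n)%N)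
    (laurent : bool) (P : lmodType R[i]) (D : Kdata m n P)
    (HP : simple_Kmodule laurent D) (lam : {ffun 'I_n -> R[i]}) :
  (forall s : seq (P * basis R m n), tzero lam (sigma D lam (sigma D lam s)))
  /\
  (forall r : nat, (r <= m)%N -> (r != m -> lam = [ffun => 0]) ->
     ((forall s : seq (P * basis R m n),
          (forall x, x \in s -> inL r lam x.2) -> tzero lam (sigma D lam s))
      <-> (r = m /\ lam = [ffun => -1]))).
Proof.
case: (HP) => HK hw _.
split; first by move=> s; exact: (part1 HK).
move=> r hrm hr0; split.
- move=> H; case: (eqVneq r m) => [erm|nrm].
    split => //; rewrite erm in H.
    case: (eqVneq lam [ffun => -1]) => // hneq.
    by exfalso; apply: (partB HK hw hneq H).
  exfalso; have hl0 := hr0 nrm.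
  have hlt : (r < m)%N by rewrite ltn_neqAle nrm hrm.
  exact: (partC HK hw hlt hl0 H).
- case=> -> hl s hs; exact: (partA HK hl hs).
Qed.
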